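(* The following two statements are equivalent: (1) For all $n\ge1$, every infinite sequence of positive integers $x_1<x_2<\cdots$ with $x_{i+1}-x_i\le n$ for all $i$ contains a double 3-term arithmetic progression. (2) For all $n\ge1$ and all $m\in\mathbb{N}$, every infinite sequence of positive integers $x_1<x_2<\cdots$ with $x_{i+1}-x_i\le n$ for all $i$ contains a double 3-term arithmetic progression $x_i,x_j,x_k$ (with $i<j<k$) such that $j-i=k-j\ge m$.
   Context: An increasing sequence of positive integers $x_1<x_2<\cdots$ contains a double 3-term arithmetic progression $x_i,x_j,x_k$ if $i<j<k$, $i+k=2j$ and $x_i+x_k=2x_j$. *)

(* Defs.v *)
(* Stdlib-free: plain nat, Prop connectives. Sequences are indexed from 0
   (x 0 = x_1); this index shift does not affect any statement. *)

Definition admissible (n : nat) (x : nat -> nat) : Prop :=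
  (forall i, 0 < x i) /\ (forall i, x i < x (S i)) /\ (forall i, x (S i) - x i <= n).

Definition double3AP (x : nat -> nat) (i j k : nat) : Prop :=
  i < j /\ j < k /\ i + k = 2 * j /\ x i + x k = 2 * x j.

Definition has_double3AP (x : nat -> nat) : Prop :=
  exists i j k, double3AP x i j k.

(* Main.v *)
Require Import Defs.
From Stdlib Require Import Arith Lia.

Lemma gap_bound n x : admissible n x -> forall d a, x a <= x (a + d) /\ x (a + d) - x a <= d * n.
Proof.
  intros [H0 [H1 H2]] d a. induction d as [|d IH].
  - replace (a + 0) with a by lia. lia.
  - specialize (H1 (a + d)). specialize (H2 (a + d)).
    replace (a + S d) with (S (a + d)) by lia. lia.
Qed.

Theorem theorem5 :
  (forall n : nat, 1 <= n -> forall x : nat -> nat,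
      admissible n x -> has_double3AP x)
  <->
  (forall n : nat, 1 <= n -> forall m : nat, forall x : nat -> nat,
      admissible n x ->
      exists i j k, double3AP x i j k /\ j - i = k - j /\ m <= j - i).
Proof.
  split.
  - intros H n Hn m x Hx.
    pose (y := fun t => x (S m * t)).
    assert (Hy : admissible (S m * n) y).
    { destruct Hx as [A [B C]] eqn:E.
      split; [|split]; intro t; unfold y.
      - apply A.
      - pose proof (gap_bound n x Hx (S m) (S m * t)) as [G1 G2].
        pose proof (B (S m * t)).
        pose proof (gap_bound n x Hx m (S (S m * t))) as [G3 _].
        replace (S m * S t) with (S m * t + S m) by lia.
        replace (S m * t + S m) with (S (S m * t) + m) by lia. lia.
      - pose proof (gap_bound n x Hx (S m) (S m * t)) as [G1 G2].
        replace (S m * S t) with (S m * t + S m) by lia. lia. }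
    destruct (H (S m * n) ltac:(lia) y Hy) as [i [j [k [D1 [D2 [D3 D4]]]]]].
    exists (S m * i), (S m * j), (S m * k). unfold y in D4.
    unfold double3AP. nia.
  - intros H n Hn x Hx. destruct (H n Hn 0 x Hx) as [i [j [k [D _]]]].
    exists i, j, k. exact D.
Qed.
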